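(* Let $\rho\in\mathbb R$, let $\mathbf a=(a_{m,n})$ be a complex matrix and let $\kappa_{\mathbf a}:\mathbb H_\rho\times\mathbb H_\rho\to\mathbb C$ be a positive semi-definite Dirichlet series kernel with coefficient matrix $\mathbf a$. Then $\kappa_{\mathbf a}$ is translation-invariant, i.e. $\kappa_{\mathbf a}(s-ib,u-ib)=\kappa_{\mathbf a}(s,u)$ for all $b\in\mathbb R$ and $s,u\in\mathbb H_\rho$, if and only if $\mathbf a$ is a diagonal matrix.
   Context: $\mathbb H_\rho=\{\Re s>\rho\}$. $\kappa_{\mathbf a}(s,u)=\sum_{m,n\ge1}a_{m,n}m^{-s}n^{-\bar u}$ is a Dirichlet series kernel on $\mathbb H_\rho$ if $(s,u)\mapsto\kappa_{\mathbf a}(s,\bar u)$ is regularly convergent on $\mathbb H_\rho\times\mathbb H_\rho$ (regular convergence of $\sum c_{m,n}m^{-s}n^{-u}$ at $(s_0,u_0)$: the double series converges there and every series $\sum_m c_{m,n}m^{-s_0}$ and $\sum_n c_{m,n}n^{-u_0}$ converges). Positive semi-definite: every finite matrix $(\kappa_{\mathbf a}(s_i,s_j))$ is positive semi-definite. *)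

(* Defs.v *)
From Stdlib Require Import Reals.
From Coquelicot Require Import Coquelicot.
Open Scope R_scope.

(* n^{-s} = exp(-s ln n) for a natural number n >= 1 and complex s. *)
Definition npow_neg (n : nat) (s : C) : C :=
  (exp (- Re s * ln (INR n)) * cos (Im s * ln (INR n)),
   - (exp (- Re s * ln (INR n)) * sin (Im s * ln (INR n)))).

Definition in_H (rho : R) (s : C) : Prop := rho < Re s.

Definition dterm (c : nat -> nat -> C) (s u : C) (m n : nat) : C :=
  Cmult (Cmult (c m n) (npow_neg m s)) (npow_neg n u).

(* Rectangular partial sums over 1 <= m <= M+1, 1 <= n <= N+1. *)
Definition dpartial (c : nat -> nat -> C) (s u : C) (M N : nat) : C :=
  sum_n (fun i => sum_n (fun j => dterm c s u (S i) (S j)) N) M.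

(* Convergence (Pringsheim sense) of the double series to l:
   the rectangular partial sums S_{M,N} tend to l as M, N -> oo jointly. *)
Definition dseries_conv_to (c : nat -> nat -> C) (s u : C) (l : C) : Prop :=
  filterlim (fun p : nat * nat => dpartial c s u (fst p) (snd p))
    (filter_prod eventually eventually) (locally l).

Definition regularly_convergent_at (c : nat -> nat -> C) (s0 u0 : C) : Prop :=
  (exists l, dseries_conv_to c s0 u0 l) /\
  (forall n, (1 <= n)%nat -> ex_series (fun i => dterm c s0 u0 (S i) n)) /\
  (forall m, (1 <= m)%nat -> ex_series (fun j => dterm c s0 u0 m (S j))).

(* kappa_a is a Dirichlet series kernel on H_rho: (s,u) |-> kappa_a(s, conj u)
   = sum a_{m,n} m^{-s} n^{-u} is regularly convergent on H_rho x H_rho. *)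
Definition dirichlet_series_kernel (rho : R) (a : nat -> nat -> C) : Prop :=
  forall s u, in_H rho s -> in_H rho u -> regularly_convergent_at a s u.

Definition is_kernel_of (rho : R) (a : nat -> nat -> C) (K : C -> C -> C) : Prop :=
  forall s u, in_H rho s -> in_H rho u -> dseries_conv_to a s (Cconj u) (K s u).

Definition psd_kernel (rho : R) (K : C -> C -> C) : Prop :=
  forall (k : nat) (pts x : nat -> C),
    (forall i, (i <= k)%nat -> in_H rho (pts i)) ->
    let q := sum_n (fun i => sum_n (fun j =>
               Cmult (Cmult (Cconj (x i)) (K (pts i) (pts j))) (x j)) k) k in
    Im q = 0 /\ 0 <= Re q.

Definition translation_invariant (rho : R) (K : C -> C -> C) : Prop :=
  forall (b : R) s u, in_H rho s -> in_H rho u ->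
    K (Cminus s (0, b)) (Cminus u (0, b)) = K s u.

Definition diagonal (a : nat -> nat -> C) : Prop :=
  forall m n, (1 <= m)%nat -> (1 <= n)%nat -> m <> n -> a m n = 0%C.

(* Main.v *)
Require Import Defs.
From Stdlib Require Import Reals Lra Lia ZArith.
From Coquelicot Require Import Coquelicot.

Lemma np_mult_gen (m n : nat) (z1 z2 : C) :
  Cmult (npow_neg m z1) (npow_neg n z2) =
  (exp (- Re z1 * ln (INR m)) * exp (- Re z2 * ln (INR n)) *
     cos (Im z1 * ln (INR m) + Im z2 * ln (INR n)),
   - (exp (- Re z1 * ln (INR m)) * exp (- Re z2 * ln (INR n)) *
     sin (Im z1 * ln (INR m) + Im z2 * ln (INR n)))).
Proof.
  unfold npow_neg, Cmult; simpl. rewrite cos_plus, sin_plus.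
  apply injective_projections; simpl; ring.
Qed.

Lemma Cmod_np (n : nat) (z : C) :
  Cmod (npow_neg n z) = exp (- Re z * ln (INR n)).
Proof.
  unfold npow_neg, Cmod; simpl.
  set (e := exp (- Re z * ln (INR n))).
  set (th := Im z * ln (INR n)).
  replace (e * cos th * (e * cos th * 1) + - (e * sin th) * (- (e * sin th) * 1))
    with (e ^ 2 * ((sin th)² + (cos th)²)) by (unfold Rsqr; ring).
  rewrite sin2_cos2, Rmult_1_r. apply sqrt_pow2. unfold e; left; apply exp_pos.
Qed.

Lemma exp_nat (X m : nat) : (1 <= m)%nat ->
  exp (- INR X * ln (INR m)) = / (INR m ^ X).
Proof.
  intros Hm. assert (0 < INR m) by (apply lt_0_INR; lia).
  rewrite <- Rpower_pow by lra. unfold Rpower.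
  replace (- INR X * ln (INR m)) with (- (INR X * ln (INR m))) by ring.
  apply exp_Ropp.
Qed.


Lemma dterm_assoc c s u m n : dterm c s u m n = Cmult (c m n) (Cmult (npow_neg m s) (npow_neg n u)).
Proof. unfold dterm. ring. Qed.

Lemma conv_unique c s u l1 l2 : dseries_conv_to c s u l1 -> dseries_conv_to c s u l2 -> l1 = l2.
Proof.
  intros H1 H2. exact (filterlim_locally_unique _ l1 l2 H1 H2).
Qed.

Lemma np_same m z1 z2 w1 w2 : Re z1 = Re w1 -> Re z2 = Re w2 -> (Im z1 + Im z2 = Im w1 + Im w2)%R ->
  Cmult (npow_neg m z1) (npow_neg m z2) = Cmult (npow_neg m w1) (npow_neg m w2).
Proof.
  intros H1 H2 H3. rewrite !np_mult_gen, H1, H2.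
  rewrite <- !Rmult_plus_distr_r, H3. reflexivity.
Qed.

Lemma diag_inv rho a K : is_kernel_of rho a K -> diagonal a -> translation_invariant rho K.
Proof.
  intros HK Hd b s u Hs Hu.
  assert (Hs' : in_H rho (Cminus s (0, b))) by (unfold in_H, Cminus, Cplus, Copp, Re in *; simpl; lra).
  assert (Hu' : in_H rho (Cminus u (0, b))) by (unfold in_H, Cminus, Cplus, Copp, Re in *; simpl; lra).
  pose proof (HK _ _ Hs' Hu') as H1. pose proof (HK _ _ Hs Hu) as H2.
  apply (conv_unique a (Cminus s (0, b)) (Cconj (Cminus u (0, b)))); [exact H1|].
  unfold dseries_conv_to in *. eapply filterlim_ext; [|exact H2].
  intros [M N]; simpl. unfold dpartial. apply sum_n_ext; intro i. apply sum_n_ext; intro j.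
  rewrite !dterm_assoc.
  destruct (Nat.eq_dec (S i) (S j)) as [E|E].
  - rewrite <- E. f_equal. apply np_same; unfold Cminus, Cplus, Copp, Cconj, Re, Im; cbn [fst snd]; ring.
  - rewrite Hd by lia. rewrite !Cmult_0_l. reflexivity.
Qed.


Lemma Cmod_sum (u : nat -> C) N : Cmod (sum_n u N) <= sum_n (fun i => Cmod (u i)) N.
Proof.
  induction N.
  - rewrite !sum_O. lra.
  - rewrite !sum_Sn. eapply Rle_trans; [apply Cmod_triangle|].
    change (plus (sum_n (fun i => Cmod (u i)) N) (Cmod (u (S N))))
      with (sum_n (fun i => Cmod (u i)) N + Cmod (u (S N))). lra.
Qed.

Lemma sum_le (f g : nat -> R) N : (forall i, (i <= N)%nat -> f i <= g i) -> sum_n f N <= sum_n g N.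
Proof.
  induction N; intros H.
  - rewrite !sum_O. apply H; lia.
  - rewrite !sum_Sn. change (sum_n f N + f (S N) <= sum_n g N + g (S N)).
    apply Rplus_le_compat; [apply IHN; intros; apply H; lia| apply H; lia].
Qed.

Lemma sum_zero N : sum_n (fun _ : nat => 0) N = 0.
Proof.
  induction N. - now rewrite sum_O. - rewrite sum_Sn, IHN. change (0 + 0 = 0). ring.
Qed.

Lemma Csum_minus (u v : nat -> C) N : Cminus (sum_n u N) (sum_n v N) = sum_n (fun i => Cminus (u i) (v i)) N.
Proof.
  induction N.
  - now rewrite !sum_O.
  - rewrite !sum_Sn, <- IHN. change ((sum_n u N + u (S N)) - (sum_n v N + v (S N)) =
      (sum_n u N - sum_n v N) + (u (S N) - v (S N)))%C. ring.
Qed.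

Lemma Csum_delta (u : nat -> C) N i0 : (i0 <= N)%nat ->
  sum_n u N = Cplus (sum_n (fun i => if Nat.eqb i i0 then (RtoC 0) else u i) N) (u i0).
Proof.
  induction N; intros Hi.
  - assert (i0 = 0%nat) by lia. subst. rewrite !sum_O. simpl.
    change (u 0%nat = 0 + u 0%nat)%C. ring.
  - destruct (Nat.eq_dec i0 (S N)) as [E|E].
    + subst. rewrite !sum_Sn. rewrite Nat.eqb_refl.
      rewrite (sum_n_ext_loc (fun i => if Nat.eqb i (S N) then RtoC 0 else u i) u N).
      2:{ intros n Hn. destruct (Nat.eqb_spec n (S N)); [lia|reflexivity]. }
      change (sum_n u N + u (S N) = (sum_n u N + 0) + u (S N))%C. ring.
    + rewrite !sum_Sn. rewrite IHN by lia.
      destruct (Nat.eqb_spec (S N) i0); [lia|].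
      change ((sum_n (fun i => if Nat.eqb i i0 then (RtoC 0) else u i) N + u i0) + u (S N) =
        (sum_n (fun i => if Nat.eqb i i0 then (RtoC 0) else u i) N + u (S N)) + u i0)%C. ring.
Qed.

Lemma sum_deltaR (c : R) p M : (1 <= p)%nat ->
  sum_n (fun i => if Nat.eqb (S i) p then c else 0) M = if Nat.leb p (S M) then c else 0.
Proof.
  intros Hp. induction M.
  - rewrite sum_O. destruct (Nat.eqb_spec 1 p), (Nat.leb_spec p 1); try lia; reflexivity.
  - rewrite sum_Sn, IHM. change ((if Nat.leb p (S M) then c else 0) +
      (if Nat.eqb (S (S M)) p then c else 0) = if Nat.leb p (S (S M)) then c else 0).
    destruct (Nat.eqb_spec (S (S M)) p), (Nat.leb_spec p (S M)), (Nat.leb_spec p (S (S M))); try lia; ring.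
Qed.

Lemma sum_deltaR_le (c : R) p M : (1 <= p)%nat -> 0 <= c ->
  sum_n (fun i => if Nat.eqb (S i) p then c else 0) M <= c.
Proof. intros. rewrite sum_deltaR by auto. destruct (Nat.leb p (S M)); lra. Qed.

Lemma telescope (v : nat -> R) (K : R) N : 0 <= K ->
  (forall j, v j <= K * (/ INR (S j) - / INR (S (S j)))) ->
  sum_n v N <= K.
Proof.
  intros HK Hv. assert (sum_n v N <= K * (1 - / INR (S (S N)))).
  { induction N.
    - rewrite sum_O. specialize (Hv 0%nat). simpl in Hv |- *. replace (/1) with 1 in Hv by field. lra.
    - rewrite sum_Sn. change (sum_n v N + v (S N) <= K * (1 - / INR (S (S (S N))))).
      specialize (Hv (S N)). nra. }
  assert (0 < / INR (S (S N))) by (apply Rinv_0_lt_compat, lt_0_INR; lia). nra.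
Qed.


Lemma extract (g : nat -> nat -> C) M N i0 j0 : (i0 <= M)%nat -> (j0 <= N)%nat ->
  Cmod (g i0 j0) <= Cmod (sum_n (fun i => sum_n (g i) N) M) +
    sum_n (fun i => sum_n (fun j => if (Nat.eqb i i0 && Nat.eqb j j0)%bool then 0 else Cmod (g i j)) N) M.
Proof.
  intros Hi Hj.
  set (h := fun i j => if (Nat.eqb i i0 && Nat.eqb j j0)%bool then RtoC 0 else g i j).
  assert (E : sum_n (fun i => sum_n (g i) N) M = Cplus (sum_n (fun i => sum_n (h i) N) M) (g i0 j0)).
  { rewrite (Csum_delta (fun i => sum_n (g i) N) M i0 Hi).
    rewrite (Csum_delta (fun i => sum_n (h i) N) M i0 Hi).
    rewrite (Csum_delta (g i0) N j0 Hj).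
    rewrite (sum_n_ext (fun i => if Nat.eqb i i0 then RtoC 0 else sum_n (h i) N)
                       (fun i => if Nat.eqb i i0 then RtoC 0 else sum_n (g i) N)).
    2:{ intro i. destruct (Nat.eqb_spec i i0); [reflexivity|].
        apply sum_n_ext. intro j. unfold h. destruct (Nat.eqb_spec i i0); [lia|reflexivity]. }
    rewrite (sum_n_ext (h i0) (fun i => if Nat.eqb i j0 then RtoC 0 else g i0 i)).
    2:{ intro j. unfold h. rewrite Nat.eqb_refl. reflexivity. }
    rewrite Cplus_assoc. reflexivity. }
  assert (E2 : g i0 j0 = Cminus (sum_n (fun i => sum_n (g i) N) M) (sum_n (fun i => sum_n (h i) N) M)).
  { rewrite E. ring. }
  rewrite E2. unfold Cminus. eapply Rle_trans; [apply Cmod_triangle|]. rewrite Cmod_opp.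
  apply Rplus_le_compat_l.
  eapply Rle_trans; [apply Cmod_sum|]. apply sum_le. intros i _.
  eapply Rle_trans; [apply Cmod_sum|]. apply sum_le. intros j _.
  unfold h. destruct (Nat.eqb i i0 && Nat.eqb j j0)%bool; [rewrite Cmod_0|]; lra.
Qed.

Lemma dterm_assoc' c s u m n : dterm c s u m n = Cmult (Cmult (c m n) (npow_neg m s)) (npow_neg n u).
Proof. reflexivity. Qed.

Lemma fin_bound (G : nat -> nat -> R) (P : nat -> Prop) N :
  (forall m, (m <= N)%nat -> exists B, forall j, P m -> G m j <= B) ->
  exists B, forall m j, (m <= N)%nat -> P m -> G m j <= B.
Proof.
  induction N; intros H.
  - destruct (H 0%nat (le_n 0)) as [B HB]. exists B. intros m j Hm Pm.
    assert (m = 0%nat) by lia. subst. auto.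
  - destruct IHN as [B1 HB1]. { intros; apply H; lia. }
    destruct (H (S N) (le_n _)) as [B2 HB2]. exists (Rmax B1 B2).
    intros m j Hm Pm. destruct (Nat.eq_dec m (S N)).
    + subst. eapply Rle_trans; [apply HB2; auto| apply Rmax_r].
    + eapply Rle_trans; [apply HB1; auto; lia| apply Rmax_l].
Qed.

Lemma fin_bound1 (g : nat -> R) N : exists B, forall j, (j <= N)%nat -> g j <= B.
Proof.
  destruct (fin_bound (fun m _ => g m) (fun _ => True) N) as [B HB].
  { intros m _. exists (g m). intros; lra. }
  exists B. intros j Hj. exact (HB j 0%nat Hj I).
Qed.

Lemma series_bounded (u : nat -> C) : ex_series u -> exists B, forall j, Cmod (u j) <= B.
Proof.
  intros [l Hl]. unfold is_series in Hl.
  pose proof (proj1 (filterlim_locally_ball_norm (K:=C_AbsRing) (U:=C_NormedModule) _ _) Hl (mkposreal 1 Rlt_0_1)) as [N HN].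
  destruct (fin_bound1 (fun j => Cmod (u j)) N) as [B0 HB0].
  exists (Rmax 2 B0). intro j. destruct (Compare_dec.le_lt_dec j N) as [Hj|Hj].
  - eapply Rle_trans; [apply HB0; auto| apply Rmax_r].
  - eapply Rle_trans; [|apply Rmax_l]. destruct j as [|j]; [lia|].
    pose proof (HN (S j) ltac:(lia)) as H1. pose proof (HN j ltac:(lia)) as H2.
    unfold ball_norm in H1, H2.
    change (Cmod (Cminus (sum_n u (S j)) l) < 1) in H1.
    rewrite sum_Sn in H1. change (Cmod ((sum_n u j + u (S j)) - l) < 1)%C in H1.
    change (Cmod (sum_n u j - l) < 1)%C in H2.
    replace (u (S j)) with ((sum_n u j + u (S j) - l) - (sum_n u j - l))%C by ring.
    unfold Cminus at 1. eapply Rle_trans; [apply Cmod_triangle|]. rewrite Cmod_opp. lra.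
Qed.

Lemma Cmod4 (a b c d : C) : Cmod (a - b - c + d)%C <= Cmod a + Cmod b + Cmod c + Cmod d.
Proof.
  unfold Cminus. eapply Rle_trans; [apply Cmod_triangle|].
  pose proof (Cmod_triangle (a + - b) (- c)). pose proof (Cmod_triangle a (- b)).
  rewrite Cmod_opp in *. lra.
Qed.

Lemma dpartial_S c s u i J : dpartial c s u (S i) J =
  Cplus (dpartial c s u i J) (sum_n (fun j => dterm c s u (S (S i)) (S j)) J).
Proof. unfold dpartial. rewrite sum_Sn. reflexivity. Qed.

Lemma pring_bounded c s u l : dseries_conv_to c s u l ->
  exists N0, forall i j, (N0 <= i)%nat -> (N0 <= j)%nat -> Cmod (dterm c s u (S (S i)) (S (S j))) <= 4.
Proof.
  intros H. unfold dseries_conv_to in H.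
  destruct (proj1 (filterlim_locally_ball_norm (K:=C_AbsRing) (U:=C_NormedModule) _ _) H (mkposreal 1 Rlt_0_1))
    as [Q R0 [N1 HQ] [N2 HR] HP].
  exists (max N1 N2). intros i j Hi Hj.
  assert (HB : forall x y, (max N1 N2 <= x)%nat -> (max N1 N2 <= y)%nat ->
            Cmod (Cminus (dpartial c s u x y) l) < 1).
  { intros x y Hx Hy. pose proof (HP x y (HQ x ltac:(lia)) (HR y ltac:(lia))) as Hb.
    unfold ball_norm in Hb. exact Hb. }
  pose proof (HB (S i) (S j) ltac:(lia) ltac:(lia)) as HA.
  pose proof (HB i (S j) ltac:(lia) ltac:(lia)) as HBb.
  pose proof (HB (S i) j ltac:(lia) ltac:(lia)) as HC.
  pose proof (HB i j ltac:(lia) ltac:(lia)) as HD.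
  rewrite dpartial_S in HA, HC. rewrite sum_Sn in HA.
  set (r := sum_n (fun j0 => dterm c s u (S (S i)) (S j0)) j) in *.
  set (t := dterm c s u (S (S i)) (S (S j))) in *.
  set (B := dpartial c s u i (S j)) in *. set (D := dpartial c s u i j) in *.
  change (Cmod (B + (r + t) - l) < 1)%C in HA.
  replace t with ((B + (r + t) - l) - (B - l) - ((D + r) - l) + (D - l))%C by ring.
  eapply Rle_trans; [apply Cmod4|]. lra.
Qed.

Lemma inv_em (x : R) (k m : nat) : (1 <= m)%nat -> x <= INR k ->
  / exp (- x * ln (INR m)) <= INR m ^ k.
Proof.
  intros Hm Hx. assert (0 < INR m) by (apply lt_0_INR; lia).
  assert (0 <= ln (INR m)) by (rewrite <- ln_1; apply ln_le; [lra| apply (le_INR 1); lia]).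
  rewrite <- Rpower_pow by lra. unfold Rpower.
  replace (- x * ln (INR m)) with (- (x * ln (INR m))) by ring. rewrite exp_Ropp, Rinv_inv.
  destruct (Rle_lt_or_eq_dec _ _ (Rmult_le_compat_r _ _ _ H0 Hx)) as [E|E].
  - left. apply exp_increasing. exact E.
  - rewrite E. lra.
Qed.

Lemma coef_bound rho a : dirichlet_series_kernel rho a ->
  exists B k, 0 <= B /\ rho < INR k /\
    forall m n, (1 <= m)%nat -> (1 <= n)%nat -> Cmod (a m n) <= B * INR m ^ k * INR n ^ k.
Proof.
  intros H.
  set (s0 := (rho + 1, 0) : C).
  assert (Hs0 : in_H rho s0) by (unfold in_H, s0, Re; simpl; lra).
  destruct (H s0 s0 Hs0 Hs0) as [[l Hl] [Hcol Hrow]].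
  destruct (pring_bounded _ _ _ _ Hl) as [N0 HN0].
  destruct (fin_bound (fun m j => Cmod (dterm a s0 s0 m (S j))) (fun m => (1 <= m)%nat) (S N0)) as [Br HBr].
  { intros m _. destruct (Nat.le_gt_cases 1 m) as [Hm|Hm].
    - destruct (series_bounded _ (Hrow m Hm)) as [B HB]. exists B. intros; auto.
    - exists 0. intros; lia. }
  destruct (fin_bound (fun n i => Cmod (dterm a s0 s0 (S i) n)) (fun m => (1 <= m)%nat) (S N0)) as [Bc HBc].
  { intros n _. destruct (Nat.le_gt_cases 1 n) as [Hn|Hn].
    - destruct (series_bounded _ (Hcol n Hn)) as [B HB]. exists B. intros; auto.
    - exists 0. intros; lia. }
  set (BT := Rmax 4 (Rmax Br Bc)).
  assert (HT : forall m n, (1 <= m)%nat -> (1 <= n)%nat -> Cmod (dterm a s0 s0 m n) <= BT).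
  { intros m n Hm Hn. unfold BT.
    destruct (Compare_dec.le_lt_dec m (S N0)) as [H1|H1].
    - replace n with (S (pred n)) by lia.
      eapply Rle_trans; [apply (HBr m (pred n) H1 Hm)|].
      eapply Rle_trans; [apply Rmax_l| apply Rmax_r].
    - destruct (Compare_dec.le_lt_dec n (S N0)) as [H2|H2].
      + replace m with (S (pred m)) by lia.
        eapply Rle_trans; [apply (HBc n (pred m) H2 Hn)|].
        eapply Rle_trans; [apply Rmax_r| apply Rmax_r].
      + replace m with (S (S (m - 2))) by lia. replace n with (S (S (n - 2))) by lia.
        eapply Rle_trans; [apply HN0; lia| apply Rmax_l]. }
  destruct (archimed (Rabs rho + 1)) as [Hup _].
  assert (Hpos : (0 < up (Rabs rho + 1))%Z).
  { apply lt_IZR. pose proof (Rabs_pos rho). simpl. lra. }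
  set (k := Z.to_nat (up (Rabs rho + 1))).
  assert (Hk : INR k = IZR (up (Rabs rho + 1))).
  { unfold k. rewrite INR_IZR_INZ, Znat.Z2Nat.id by lia. reflexivity. }
  assert (Hk2 : rho + 1 <= INR k) by (rewrite Hk; pose proof (Rle_abs rho); lra).
  exists BT, k. split; [unfold BT; eapply Rle_trans; [|apply Rmax_l]; lra|].
  split; [lra|].
  intros m n Hm Hn.
  pose proof (HT m n Hm Hn) as HTmn.
  rewrite dterm_assoc', !Cmod_mult, !Cmod_np in HTmn.
  unfold s0, Re in HTmn; simpl fst in HTmn.
  set (em := exp (- (rho + 1) * ln (INR m))) in *.
  set (en := exp (- (rho + 1) * ln (INR n))) in *.
  assert (0 < em) by apply exp_pos. assert (0 < en) by apply exp_pos.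
  pose proof (inv_em (rho + 1) k m Hm Hk2) as Im. pose proof (inv_em (rho + 1) k n Hn Hk2) as In.
  fold em in Im. fold en in In.
  assert (E : Cmod (a m n) = Cmod (a m n) * em * en * / em * / en) by (field; lra).
  rewrite E.
  assert (0 <= BT) by (unfold BT; eapply Rle_trans; [|apply Rmax_l]; lra).
  assert (0 < / em) by (apply Rinv_0_lt_compat; lra).
  assert (0 < / en) by (apply Rinv_0_lt_compat; lra).
  assert (0 <= Cmod (a m n) * em * en).
  { pose proof (Cmod_ge_0 (a m n)). apply Rmult_le_pos; [apply Rmult_le_pos|]; lra. }
  apply Rmult_le_compat; [apply Rmult_le_pos; lra | lra | apply Rmult_le_compat; lra | exact In].
Qed.


Lemma TL (k : nat) (c : R) (L W N : nat) : 0 <= c -> (1 <= L)%nat ->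
  sum_n (fun j => if Nat.leb L (S j) then INR (S j) ^ k * (c ^ (W + k + 2) / INR (S j) ^ (W + k + 2)) else 0) N
  <= 2 * c ^ (k + 2) * (c / INR L) ^ W.
Proof.
  intros Hc HL.
  assert (HLp : 1 <= INR L) by (apply (le_INR 1); lia).
  assert (0 <= c / INR L) by (apply Rmult_le_pos; [lra| left; apply Rinv_0_lt_compat; lra]).
  apply telescope.
  { apply Rmult_le_pos; [apply Rmult_le_pos; [lra| apply pow_le; lra]| apply pow_le; lra]. }
  intro j. set (n := INR (S j)).
  assert (Hn : 1 <= n) by (unfold n; apply (le_INR 1); lia).
  assert (Hn1 : INR (S (S j)) = n + 1) by (unfold n; rewrite (S_INR (S j)); reflexivity).
  rewrite Hn1.
  assert (Hd : 0 <= / n - / (n + 1)).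
  { assert (/ (n+1) <= / n) by (apply Rinv_le_contravar; lra). lra. }
  destruct (Nat.leb_spec L (S j)) as [HLj|HLj].
  - assert (HLn : INR L <= n) by (unfold n; apply le_INR; lia).
    assert (E : n ^ k * (c ^ (W + k + 2) / n ^ (W + k + 2)) = c ^ (k + 2) * (c / n) ^ W * (/ n ^ 2)).
    { unfold Rdiv. rewrite !pow_add, Rpow_mult_distr, pow_inv. field; repeat split; try apply pow_nonzero; lra. }
    rewrite E.
    assert (Hw : (c / n) ^ W <= (c / INR L) ^ W).
    { apply pow_incr. split.
      - apply Rmult_le_pos; [lra| left; apply Rinv_0_lt_compat; lra].
      - unfold Rdiv. apply Rmult_le_compat_l; [lra|]. apply Rinv_le_contravar; lra. }
    assert (Hsq : / n ^ 2 <= 2 * (/ n - / (n + 1))).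
    { replace (2 * (/ n - / (n + 1))) with (2 / (n * (n + 1))) by (field; lra).
      replace (/ n ^ 2) with (1 / (n * n)) by (field; lra).
      unfold Rdiv. rewrite Rmult_1_l.
      replace (2 * / (n * (n + 1))) with (/ (n * (n + 1) / 2)) by (field; lra).
      apply Rinv_le_contravar; nra. }
    assert (0 <= c ^ (k + 2)) by (apply pow_le; lra).
    assert (0 <= (c / n) ^ W) by (apply pow_le; apply Rmult_le_pos; [lra| left; apply Rinv_0_lt_compat; lra]).
    assert (0 <= / n ^ 2) by (left; apply Rinv_0_lt_compat; apply pow_lt; lra).
    assert (0 <= (c / INR L) ^ W) by (apply pow_le; lra).
    assert (c ^ (k + 2) * (c / n) ^ W <= c ^ (k + 2) * (c / INR L) ^ W) by (apply Rmult_le_compat_l; lra).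
    assert (0 <= c ^ (k + 2) * (c / n) ^ W) by (apply Rmult_le_pos; lra).
    eapply Rle_trans.
    { apply Rmult_le_compat; [lra| lra| exact H4| exact Hsq]. }
    assert (0 <= c ^ (k + 2) * (c / INR L) ^ W) by (apply Rmult_le_pos; lra).
    lra.
  - assert (0 <= c ^ (k + 2)) by (apply pow_le; lra).
    assert (0 <= (c / INR L) ^ W) by (apply pow_le; lra).
    assert (0 <= 2 * c ^ (k + 2) * (c / INR L) ^ W) by (apply Rmult_le_pos; [apply Rmult_le_pos|]; lra).
    apply Rmult_le_pos; lra.
Qed.


Definition fdiff (a : nat -> nat -> C) (X Y : nat) (t : R) (m n : nat) : C :=
  Cminus (dterm a (INR X, t) (Cconj (INR Y, t)) m n) (dterm a (INR X, 0) (Cconj (INR Y, 0)) m n).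

Lemma F1 a X Y t m n : (1 <= m)%nat -> (1 <= n)%nat ->
  Cmod (fdiff a X Y t m n) <= 2 * Cmod (a m n) * (/ INR m ^ X * / INR n ^ Y).
Proof.
  intros Hm Hn. unfold fdiff, Cminus. eapply Rle_trans; [apply Cmod_triangle|]. rewrite Cmod_opp.
  rewrite !dterm_assoc', !Cmod_mult, !Cmod_np. unfold Cconj, Re. cbn [fst snd].
  rewrite !exp_nat by auto. lra.
Qed.

Lemma F2 a X Y t m : fdiff a X Y t m m = RtoC 0.
Proof.
  unfold fdiff. rewrite !dterm_assoc.
  rewrite (np_same m (INR X, t) (Cconj (INR Y, t)) (INR X, 0) (Cconj (INR Y, 0))).
  - unfold Cminus. ring.
  - reflexivity.
  - reflexivity.
  - unfold Cconj, Im. cbn [fst snd]. ring.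
Qed.

Lemma F3 a X Y t m n : a m n = RtoC 0 -> fdiff a X Y t m n = RtoC 0.
Proof. intros H. unfold fdiff, dterm. rewrite H. unfold Cminus. ring. Qed.

Lemma np_pair m n x y th1 th2 :
  Cmult (npow_neg m (x, th1)) (npow_neg n (Cconj (y, th2))) =
  (exp (- x * ln (INR m)) * exp (- y * ln (INR n)) * cos (th1 * ln (INR m) - th2 * ln (INR n)),
   - (exp (- x * ln (INR m)) * exp (- y * ln (INR n)) * sin (th1 * ln (INR m) - th2 * ln (INR n)))).
Proof.
  rewrite np_mult_gen. unfold Cconj, Re, Im. cbn [fst snd].
  replace (th1 * ln (INR m) + - th2 * ln (INR n)) with (th1 * ln (INR m) - th2 * ln (INR n)) by ring.
  reflexivity.
Qed.

Lemma F4 a X Y p q : (1 <= p)%nat -> (1 <= q)%nat -> ln (INR q) - ln (INR p) <> 0 ->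
  Cmod (fdiff a X Y (PI / (ln (INR q) - ln (INR p))) p q) = 2 * Cmod (a p q) * (/ INR p ^ X * / INR q ^ Y).
Proof.
  intros Hp Hq Hl. unfold fdiff. rewrite !dterm_assoc, !np_pair.
  replace (PI / (ln (INR q) - ln (INR p)) * ln (INR p) - PI / (ln (INR q) - ln (INR p)) * ln (INR q))
    with (- PI) by (field; auto).
  replace (0 * ln (INR p) - 0 * ln (INR q)) with 0 by ring.
  rewrite cos_neg, sin_neg, cos_PI, sin_PI, cos_0, sin_0.
  rewrite !exp_nat by auto.
  set (e := / INR p ^ X * / INR q ^ Y).
  replace (Cminus (Cmult (a p q) (e * -1, - (e * - 0)))
                  (Cmult (a p q) (e * 1, - (e * 0))))
    with (Cmult (a p q) (RtoC (-2 * e))).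
  2:{ unfold Cminus, Cmult, Cplus, Copp, RtoC, e. apply injective_projections; cbn [fst snd]; ring. }
  rewrite Cmod_mult, Cmod_R.
  assert (0 < e) by (unfold e; apply Rmult_lt_0_compat; apply Rinv_0_lt_compat, pow_lt, lt_0_INR; lia).
  rewrite Rabs_left by lra. fold e. ring.
Qed.


Lemma sumR_mult_l c (u : nat -> R) N : sum_n (fun j => c * u j) N = c * sum_n u N.
Proof.
  induction N. - now rewrite !sum_O. - rewrite !sum_Sn, IHN. change (c * sum_n u N + c * u (S N) = c * (sum_n u N + u (S N))). ring.
Qed.

Lemma sumR_plus (u v : nat -> R) N : sum_n (fun j => u j + v j) N = sum_n u N + sum_n v N.
Proof.
  induction N. - now rewrite !sum_O. - rewrite !sum_Sn, IHN.
  change (sum_n u N + sum_n v N + (u (S N) + v (S N)) = (sum_n u N + u (S N)) + (sum_n v N + v (S N))). ring.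
Qed.

Lemma sum_nonneg (u : nat -> R) N : (forall j, 0 <= u j) -> 0 <= sum_n u N.
Proof. intros H. rewrite <- (sum_zero N). apply sum_le. intros; apply H. Qed.

Definition gam (B : R) (k p q X Y : nat) (m n : nat) : R :=
  (if Nat.eqb m p then (if Nat.leb (q + 1) n then 2 * B * INR p ^ k * (INR n ^ k * (INR q ^ Y / INR n ^ Y)) else 0) else 0)
  + (if Nat.leb (p + 1) m then 2 * B * (INR m ^ k * (INR p ^ X / INR m ^ X)) * (INR n ^ k * (INR q ^ Y / INR n ^ Y)) else 0).

Lemma pos_frac (k X : nat) (c x : R) : 0 <= c -> 0 < x -> 0 <= x ^ k * (c ^ X / x ^ X).
Proof.
  intros Hc Hx. apply Rmult_le_pos; [apply pow_le; lra|].
  apply Rmult_le_pos; [apply pow_le; lra| left; apply Rinv_0_lt_compat, pow_lt; lra].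
Qed.

Lemma gam_nonneg B k p q X Y m n : 0 <= B -> (1 <= n)%nat ->
  0 <= gam B k p q X Y m n.
Proof.
  intros HB Hn. unfold gam.
  assert (0 < INR n) by (apply lt_0_INR; lia).
  assert (0 <= INR n ^ k * (INR q ^ Y / INR n ^ Y)) by (apply pos_frac; [apply pos_INR| lra]).
  apply Rplus_le_le_0_compat.
  - destruct (Nat.eqb_spec m p); destruct (Nat.leb_spec (q + 1) n); try lra.
    apply Rmult_le_pos; [|lra]. apply Rmult_le_pos; [lra| apply pow_le, pos_INR].
  - destruct (Nat.leb_spec (p + 1) m); try lra.
    assert (0 < INR m) by (apply lt_0_INR; lia).
    assert (0 <= INR m ^ k * (INR p ^ X / INR m ^ X)) by (apply pos_frac; [apply pos_INR| lra]).
    apply Rmult_le_pos; [|lra]. apply Rmult_le_pos; lra.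
Qed.


Lemma pointwise a B k p q X Y t
  (HB0 : 0 <= B)
  (Hbd : forall m n, (1 <= m)%nat -> (1 <= n)%nat -> Cmod (a m n) <= B * INR m ^ k * INR n ^ k)
  (Hp : (1 <= p)%nat) (Hq : (1 <= q)%nat) (Hpq : p <> q)
  (IH1 : forall m n, (1 <= m)%nat -> (m < p)%nat -> (1 <= n)%nat -> m <> n -> a m n = RtoC 0)
  (IH2 : forall n, (1 <= n)%nat -> (n < q)%nat -> n <> p -> a p n = RtoC 0) (i j : nat) :
  INR p ^ X * INR q ^ Y * (if (Nat.eqb i (p - 1) && Nat.eqb j (q - 1))%bool then 0 else Cmod (fdiff a X Y t (S i) (S j)))
  <= gam B k p q X Y (S i) (S j).
Proof.
  assert (Hg := gam_nonneg B k p q X Y (S i) (S j) HB0 ltac:(lia)).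
  assert (HP : 0 < INR p) by (apply lt_0_INR; lia).
  assert (HQ : 0 < INR q) by (apply lt_0_INR; lia).
  assert (Hlam : 0 < INR p ^ X * INR q ^ Y) by (apply Rmult_lt_0_compat; apply pow_lt; lra).
  assert (Hm : 0 < INR (S i)) by (apply lt_0_INR; lia).
  assert (Hn : 0 < INR (S j)) by (apply lt_0_INR; lia).
  destruct (Nat.eqb i (p - 1) && Nat.eqb j (q - 1))%bool eqn:Eb.
  { rewrite Rmult_0_r. exact Hg. }
  assert (Zero : fdiff a X Y t (S i) (S j) = RtoC 0 -> INR p ^ X * INR q ^ Y * Cmod (fdiff a X Y t (S i) (S j)) <= gam B k p q X Y (S i) (S j)).
  { intros E. rewrite E, Cmod_0, Rmult_0_r. exact Hg. }
  assert (Gen : INR p ^ X * INR q ^ Y * Cmod (fdiff a X Y t (S i) (S j)) <=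
      INR p ^ X * INR q ^ Y * (2 * (B * INR (S i) ^ k * INR (S j) ^ k) * (/ INR (S i) ^ X * / INR (S j) ^ Y))).
  { apply Rmult_le_compat_l; [lra|]. eapply Rle_trans; [apply F1; lia|].
    assert (0 <= / INR (S i) ^ X * / INR (S j) ^ Y).
    { apply Rmult_le_pos; left; apply Rinv_0_lt_compat, pow_lt; lra. }
    pose proof (Hbd (S i) (S j) ltac:(lia) ltac:(lia)). nra. }
  destruct (Compare_dec.lt_eq_lt_dec (S i) p) as [[Hlt|Heq]|Hgt].
  - apply Zero. destruct (Nat.eq_dec (S i) (S j)) as [E|E].
    + rewrite E. apply F2.
    + apply F3. apply IH1; lia.
  - destruct (Compare_dec.lt_eq_lt_dec (S j) q) as [[Hlt2|Heq2]|Hgt2].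
    + apply Zero. destruct (Nat.eq_dec (S i) (S j)) as [E|E].
      * rewrite E. apply F2.
      * apply F3. rewrite Heq. apply IH2; lia.
    + exfalso. assert (E1 : Nat.eqb i (p - 1) = true) by (apply Nat.eqb_eq; lia).
      assert (E2 : Nat.eqb j (q - 1) = true) by (apply Nat.eqb_eq; lia).
      rewrite E1, E2 in Eb. discriminate.
    + eapply Rle_trans; [exact Gen|]. unfold gam.
      rewrite <- Heq, Nat.eqb_refl.
      destruct (Nat.leb_spec (q + 1) (S j)); [|lia].
      destruct (Nat.leb_spec (S i + 1) (S i)); [lia|].
      right. field. split; apply pow_nonzero; lra.
  - eapply Rle_trans; [exact Gen|]. unfold gam.
    destruct (Nat.eqb_spec (S i) p); [lia|].
    destruct (Nat.leb_spec (p + 1) (S i)); [|lia].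
    right. field. split; apply pow_nonzero; lra.
Qed.


Lemma gam_sum B k p q WX WY M N : 0 <= B -> (1 <= p)%nat -> (1 <= q)%nat ->
  sum_n (fun i => sum_n (fun j => gam B k p q (WX + k + 2) (WY + k + 2) (S i) (S j)) N) M
  <= 2 * B * INR p ^ k * (2 * INR q ^ (k + 2) * (INR q / INR (q + 1)) ^ WY)
     + 2 * B * (2 * INR p ^ (k + 2) * (INR p / INR (p + 1)) ^ WX) * (2 * INR q ^ (k + 2) * (INR q / INR 1) ^ WY).
Proof.
  intros HB Hp Hq.
  set (X := (WX + k + 2)%nat). set (Y := (WY + k + 2)%nat).
  set (Tq := fun j => if Nat.leb (q + 1) (S j) then INR (S j) ^ k * (INR q ^ Y / INR (S j) ^ Y) else 0).
  set (Tp := fun j => if Nat.leb (p + 1) (S j) then INR (S j) ^ k * (INR p ^ X / INR (S j) ^ X) else 0).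
  set (V := fun j => if Nat.leb 1 (S j) then INR (S j) ^ k * (INR q ^ Y / INR (S j) ^ Y) else 0).
  assert (HTq := TL k (INR q) (q + 1) WY N (pos_INR q) ltac:(lia)). fold Y in HTq. change (sum_n Tq N <= 2 * INR q ^ (k + 2) * (INR q / INR (q + 1)) ^ WY) in HTq.
  assert (HTp := TL k (INR p) (p + 1) WX M (pos_INR p) ltac:(lia)). fold X in HTp. change (sum_n Tp M <= 2 * INR p ^ (k + 2) * (INR p / INR (p + 1)) ^ WX) in HTp.
  assert (HV := TL k (INR q) 1 WY N (pos_INR q) ltac:(lia)). fold Y in HV. change (sum_n V N <= 2 * INR q ^ (k + 2) * (INR q / INR 1) ^ WY) in HV.
  assert (Vnn : 0 <= sum_n V N).
  { apply sum_nonneg. intro j. unfold V. simpl Nat.leb. apply pos_frac; [apply pos_INR| apply lt_0_INR; lia]. }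
  assert (Tqnn : 0 <= sum_n Tq N).
  { apply sum_nonneg. intro j. unfold Tq. destruct (Nat.leb _ _); [|lra]. apply pos_frac; [apply pos_INR| apply lt_0_INR; lia]. }
  assert (Tpnn : 0 <= sum_n Tp M).
  { apply sum_nonneg. intro j. unfold Tp. destruct (Nat.leb _ _); [|lra]. apply pos_frac; [apply pos_INR| apply lt_0_INR; lia]. }
  rewrite (sum_n_ext _ (fun i => (if Nat.eqb (S i) p then 2 * B * INR p ^ k * sum_n Tq N else 0)
                               + (if Nat.leb (p + 1) (S i) then 2 * B * Tp i else 0) * sum_n V N)).
  2:{ intro i. unfold gam. rewrite sumR_plus. f_equal.
      - destruct (Nat.eqb (S i) p).
        + rewrite <- sumR_mult_l. apply sum_n_ext. intro j. unfold Tq. destruct (Nat.leb (q + 1) (S j)); (match goal with |- @eq _ ?x ?y => change (@eq R x y) end); ring.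
        + apply sum_zero.
      - rewrite Rmult_comm, <- sumR_mult_l. apply sum_n_ext. intro j. unfold V, Tp. simpl (Nat.leb 1 (S j)).
        destruct (Nat.leb (p + 1) (S i)); (match goal with |- @eq _ ?x ?y => change (@eq R x y) end); ring. }
  rewrite sumR_plus.
  apply Rplus_le_compat.
  - eapply Rle_trans; [apply sum_deltaR_le; auto|].
    + apply Rmult_le_pos; [apply Rmult_le_pos; [lra| apply pow_le, pos_INR]| lra].
    + apply Rmult_le_compat_l; [apply Rmult_le_pos; [lra| apply pow_le, pos_INR]| exact HTq].
  - rewrite (sum_n_ext _ (fun i => sum_n V N * (2 * B * Tp i))).
    2:{ intro i. unfold Tp. destruct (Nat.leb (p + 1) (S i)); (match goal with |- @eq _ ?x ?y => change (@eq R x y) end); ring. }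
    rewrite sumR_mult_l, sumR_mult_l.
    assert (0 <= 2 * INR p ^ (k + 2) * (INR p / INR (p + 1)) ^ WX) by lra.
    rewrite Rmult_comm.
    apply Rmult_le_compat; [apply Rmult_le_pos; lra| lra| |exact HV].
    apply Rmult_le_compat_l; [lra| exact HTp].
Qed.


Lemma small_choice (C r eps : R) : 0 <= C -> 0 <= r < 1 -> 0 < eps ->
  exists W : nat, C * r ^ W <= eps.
Proof.
  intros HC Hr He.
  assert (Hy : 0 < eps / (C + 1)) by (apply Rdiv_lt_0_compat; lra).
  destruct (pow_lt_1_zero r ltac:(rewrite Rabs_pos_eq; lra) _ Hy) as [W HW].
  exists W. specialize (HW W (le_n _)). rewrite Rabs_pos_eq in HW by (apply pow_le; lra).
  assert (0 <= r ^ W) by (apply pow_le; lra).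
  assert ((C + 1) * r ^ W < (C + 1) * (eps / (C + 1))) by (apply Rmult_lt_compat_l; lra).
  replace ((C + 1) * (eps / (C + 1))) with eps in H0 by (field; lra). nra.
Qed.

Lemma main_step a B k rho (HB0 : 0 <= B) (Hk : rho < INR k)
  (Hbd : forall m n, (1 <= m)%nat -> (1 <= n)%nat -> Cmod (a m n) <= B * INR m ^ k * INR n ^ k)
  (Hlim : forall (X Y : nat) (t : R), rho < INR X -> rho < INR Y -> forall eps, 0 < eps ->
     exists N0, forall M N, (N0 <= M)%nat -> (N0 <= N)%nat ->
       Cmod (sum_n (fun i => sum_n (fun j => fdiff a X Y t (S i) (S j)) N) M) < eps)
  p q (Hp : (1 <= p)%nat) (Hq : (1 <= q)%nat) (Hpq : p <> q)
  (IH1 : forall m n, (1 <= m)%nat -> (m < p)%nat -> (1 <= n)%nat -> m <> n -> a m n = RtoC 0)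
  (IH2 : forall n, (1 <= n)%nat -> (n < q)%nat -> n <> p -> a p n = RtoC 0) :
  a p q = RtoC 0.
Proof.
  assert (HP : 1 <= INR p) by (apply (le_INR 1); lia).
  assert (HQ : 1 <= INR q) by (apply (le_INR 1); lia).
  assert (Hl : ln (INR q) - ln (INR p) <> 0).
  { intro E. apply Hpq. apply INR_eq. symmetry. apply ln_inv; lra. }
  set (t := PI / (ln (INR q) - ln (INR p))).
  assert (Main : forall eps, 0 < eps -> 2 * Cmod (a p q) <= 3 * eps).
  { intros eps He.
    assert (Hp1 : INR (p + 1) = INR p + 1) by (rewrite plus_INR; reflexivity).
    assert (Hq1 : INR (q + 1) = INR q + 1) by (rewrite plus_INR; reflexivity).
    assert (Hr2 : 0 <= INR q / INR (q + 1) < 1).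
    { rewrite Hq1. split; [apply Rmult_le_pos; [lra| left; apply Rinv_0_lt_compat; lra]|].
      apply Rmult_lt_reg_r with (INR q + 1); [lra|]. unfold Rdiv. rewrite Rmult_assoc, Rinv_l by lra. lra. }
    assert (Hr3 : 0 <= INR p / INR (p + 1) < 1).
    { rewrite Hp1. split; [apply Rmult_le_pos; [lra| left; apply Rinv_0_lt_compat; lra]|].
      apply Rmult_lt_reg_r with (INR p + 1); [lra|]. unfold Rdiv. rewrite Rmult_assoc, Rinv_l by lra. lra. }
    assert (HC2 : 0 <= 2 * B * INR p ^ k * (2 * INR q ^ (k + 2))).
    { apply Rmult_le_pos; [apply Rmult_le_pos; [lra| apply pow_le; lra]|].
      apply Rmult_le_pos; [lra| apply pow_le; lra]. }
    destruct (small_choice _ _ _ HC2 Hr2 He) as [WY HWY].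
    assert (HC3 : 0 <= 2 * B * (2 * INR p ^ (k + 2)) * (2 * INR q ^ (k + 2) * (INR q / INR 1) ^ WY)).
    { apply Rmult_le_pos; [apply Rmult_le_pos; [lra|apply Rmult_le_pos; [lra| apply pow_le; lra]]|].
      apply Rmult_le_pos; [apply Rmult_le_pos; [lra| apply pow_le; lra]|].
      apply pow_le. simpl INR. unfold Rdiv. rewrite Rinv_1. lra. }
    destruct (small_choice _ _ _ HC3 Hr3 He) as [WX HWX].
    set (X := (WX + k + 2)%nat). set (Y := (WY + k + 2)%nat).
    assert (HX : rho < INR X) by (apply Rlt_le_trans with (INR k); [lra| apply le_INR; unfold X; lia]).
    assert (HY : rho < INR Y) by (apply Rlt_le_trans with (INR k); [lra| apply le_INR; unfold Y; lia]).
    set (lam := INR p ^ X * INR q ^ Y).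
    assert (Hlam : 0 < lam) by (unfold lam; apply Rmult_lt_0_compat; apply pow_lt; lra).
    destruct (Hlim X Y t HX HY (eps / lam) ltac:(apply Rdiv_lt_0_compat; lra)) as [N0 HN0].
    set (M := max N0 (p - 1)). set (N := max N0 (q - 1)).
    specialize (HN0 M N ltac:(unfold M; lia) ltac:(unfold N; lia)).
    pose proof (extract (fun i j => fdiff a X Y t (S i) (S j)) M N (p - 1) (q - 1)
                  ltac:(unfold M; lia) ltac:(unfold N; lia)) as Hext.
    cbv beta in Hext. replace (S (p - 1)) with p in Hext by lia. replace (S (q - 1)) with q in Hext by lia.
    unfold t in Hext. rewrite F4 in Hext by auto. fold t in Hext.
    set (D := Cmod (sum_n (fun i => sum_n (fun j => fdiff a X Y t (S i) (S j)) N) M)) in *.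
    set (Ex := sum_n (fun i => sum_n (fun j => if (Nat.eqb i (p - 1) && Nat.eqb j (q - 1))%bool then 0
                 else Cmod (fdiff a X Y t (S i) (S j))) N) M) in *.
    assert (HEx : lam * Ex <= 2 * B * INR p ^ k * (2 * INR q ^ (k + 2) * (INR q / INR (q + 1)) ^ WY)
     + 2 * B * (2 * INR p ^ (k + 2) * (INR p / INR (p + 1)) ^ WX) * (2 * INR q ^ (k + 2) * (INR q / INR 1) ^ WY)).
    { eapply Rle_trans; [|apply (gam_sum B k p q WX WY M N HB0 Hp Hq)]. fold X Y.
      unfold Ex. rewrite <- sumR_mult_l. apply sum_le. intros i _.
      rewrite <- sumR_mult_l. apply sum_le. intros j _.
      apply (pointwise a B k p q X Y t HB0 Hbd Hp Hq Hpq IH1 IH2 i j). }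
    assert (HD : lam * D < eps).
    { apply Rmult_lt_reg_l with (/ lam); [apply Rinv_0_lt_compat; lra|].
      rewrite <- Rmult_assoc, Rinv_l, Rmult_1_l by lra. unfold Rdiv in HN0. rewrite Rmult_comm. exact HN0. }
    assert (E : 2 * Cmod (a p q) = lam * (2 * Cmod (a p q) * (/ INR p ^ X * / INR q ^ Y))).
    { unfold lam. field. split; apply pow_nonzero; lra. }
    rewrite E.
    apply Rle_trans with (lam * (D + Ex)).
    { apply Rmult_le_compat_l; lra. }
    rewrite Rmult_plus_distr_l. lra. }
  apply Cmod_eq_0.
  pose proof (Cmod_ge_0 (a p q)).
  destruct (Req_dec (Cmod (a p q)) 0) as [E|E]; [exact E|].
  specialize (Main (Cmod (a p q) / 4) ltac:(lra)). lra.
Qed.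


Lemma conv_eventually c s u l eps : dseries_conv_to c s u l -> 0 < eps ->
  exists N0, forall M N, (N0 <= M)%nat -> (N0 <= N)%nat -> Cmod (Cminus (dpartial c s u M N) l) < eps.
Proof.
  intros H He. unfold dseries_conv_to in H.
  destruct (proj1 (filterlim_locally_ball_norm (K:=C_AbsRing) (U:=C_NormedModule) _ _) H (mkposreal eps He))
    as [Q R0 [N1 HQ] [N2 HR] HP].
  exists (max N1 N2). intros M N HM HN.
  exact (HP M N (HQ M ltac:(lia)) (HR N ltac:(lia))).
Qed.

Theorem proposition5p1 (rho : R) (a : nat -> nat -> C) (K : C -> C -> C) :
  dirichlet_series_kernel rho a ->
  is_kernel_of rho a K ->
  psd_kernel rho K ->
  (translation_invariant rho K <-> diagonal a).
Proof.
  intros Hds HK _. split; [|apply diag_inv; exact HK].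
  intros HT.
  destruct (coef_bound rho a Hds) as [B [k [HB0 [Hk Hbd]]]].
  assert (Hlim : forall (X Y : nat) (t : R), rho < INR X -> rho < INR Y -> forall eps, 0 < eps ->
     exists N0, forall M N, (N0 <= M)%nat -> (N0 <= N)%nat ->
       Cmod (sum_n (fun i => sum_n (fun j => fdiff a X Y t (S i) (S j)) N) M) < eps).
  { intros X Y t HX HY eps He.
    assert (H1 : in_H rho (INR X, t)) by (unfold in_H, Re; simpl fst; lra).
    assert (H2 : in_H rho (INR Y, t)) by (unfold in_H, Re; simpl fst; lra).
    assert (H3 : in_H rho (INR X, 0)) by (unfold in_H, Re; simpl fst; lra).
    assert (H4 : in_H rho (INR Y, 0)) by (unfold in_H, Re; simpl fst; lra).
    pose proof (HT t _ _ H1 H2) as Ht.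
    replace (Cminus (INR X, t) (0, t)) with ((INR X, 0) : C) in Ht
      by (unfold Cminus, Cplus, Copp; apply injective_projections; cbn [fst snd]; ring).
    replace (Cminus (INR Y, t) (0, t)) with ((INR Y, 0) : C) in Ht
      by (unfold Cminus, Cplus, Copp; apply injective_projections; cbn [fst snd]; ring).
    pose proof (HK _ _ H1 H2) as C1. pose proof (HK _ _ H3 H4) as C0. rewrite Ht in C0.
    destruct (conv_eventually _ _ _ _ (eps / 2) C1 ltac:(lra)) as [N1 HN1].
    destruct (conv_eventually _ _ _ _ (eps / 2) C0 ltac:(lra)) as [N2 HN2].
    exists (max N1 N2). intros M N HM HN.
    specialize (HN1 M N ltac:(lia) ltac:(lia)). specialize (HN2 M N ltac:(lia) ltac:(lia)).
    assert (E : sum_n (fun i => sum_n (fun j => fdiff a X Y t (S i) (S j)) N) M =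
      Cminus (Cminus (dpartial a (INR X, t) (Cconj (INR Y, t)) M N) (K (INR X, t) (INR Y, t)))
             (Cminus (dpartial a (INR X, 0) (Cconj (INR Y, 0)) M N) (K (INR X, t) (INR Y, t)))).
    { replace (Cminus (Cminus (dpartial a (INR X, t) (Cconj (INR Y, t)) M N) (K (INR X, t) (INR Y, t)))
             (Cminus (dpartial a (INR X, 0) (Cconj (INR Y, 0)) M N) (K (INR X, t) (INR Y, t))))
        with (Cminus (dpartial a (INR X, t) (Cconj (INR Y, t)) M N) (dpartial a (INR X, 0) (Cconj (INR Y, 0)) M N))
        by (unfold Cminus; ring).
      unfold dpartial. rewrite Csum_minus. apply sum_n_ext. intro i. rewrite Csum_minus. reflexivity. }
    rewrite E. unfold Cminus at 1. eapply Rle_lt_trans; [apply Cmod_triangle|]. rewrite Cmod_opp. lra. }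
  assert (All : forall p, (1 <= p)%nat -> forall n, (1 <= n)%nat -> p <> n -> a p n = RtoC 0).
  { intro p. induction p as [p IHp] using (well_founded_induction lt_wf).
    intros Hp n. induction n as [n IHn] using (well_founded_induction lt_wf).
    intros Hn Hpn.
    apply (main_step a B k rho HB0 Hk Hbd Hlim p n Hp Hn Hpn).
    - intros m n' Hm Hmp Hn' Hmn. apply IHp; auto.
    - intros n' Hn' Hn'n Hn'p. apply IHn; auto. }
  intros m n Hm Hn Hmn. apply All; auto.
Qed.
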